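(* Let $A$ be a cofibrant $\mathbb{Z}$-graded dg commutative algebra equipped with an augmentation over the ground field, such that $H^k(A)=0$ for $k<0$ and $H^0(A)=\Bbbk$. Then the adjunction unit $A\to\iota\tau_\sharp A$ is a quasi-isomorphism.
   Context: Field $\Bbbk$ of characteristic zero, cohomological grading. $\mathbb{Z}$-graded dg commutative algebras carry the model structure whose weak equivalences are quasi-isomorphisms and fibrations are degreewise surjections (cofibrations by left lifting). $\tau_\sharp A=A/(A^*,\delta(A^* );*<0)$ is the quotient of $A$ by the dg ideal generated by its components of negative degree, a non-negatively graded dg commutative algebra; it is left adjoint to the inclusion $\iota$ of non-negatively graded dg commutative algebras into $\mathbb{Z}$-graded ones. *)

(* Defs.v *)
From HB Require Import structures.
From mathcomp Require Import all_boot all_order all_algebra.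
Set Implicit Arguments. Unset Strict Implicit. Unset Printing Implicit Defensive.
Import Order.TTheory GRing.Theory Num.Theory.
Local Open Scope ring_scope.

(* A Z-graded dg commutative algebra over K, encoded by its total algebra
   A = (+)_k A^k : an algType K together with the homogeneous components
   deg k (subspaces) forming a direct sum decomposition, and a differential. *)
Section CDGA.
Variable K : fieldType.

Definition is_cdga (A : algType K) (deg : int -> pred A) (d : A -> A) : Prop :=
  [/\
      (forall k, 0 \in deg k /\
         forall (a : K) x y, x \in deg k -> y \in deg k -> a *: x + y \in deg k),
      (forall x : A, exists (s : seq int) (f : int -> A),
          (forall k, f k \in deg k) /\ x = \sum_(k <- s) f k),
      (forall (s : seq int) (f : int -> A), uniq s ->
          (forall k, f k \in deg k) -> \sum_(k <- s) f k = 0 ->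
          forall k, k \in s -> f k = 0),
      [/\ (1 : A) \in deg 0,
          (forall i j x y, x \in deg i -> y \in deg j -> x * y \in deg (i + j)) &
          (forall i j x y, x \in deg i -> y \in deg j ->
             x * y = (-1) ^+ absz (i * j) *: (y * x))] &
      [/\ (forall (a : K) x y, d (a *: x + y) = a *: d x + d y),
          (forall k x, x \in deg k -> d x \in deg (k + 1)),
          (forall x, d (d x) = 0) &
          (forall i x y, x \in deg i ->
             d (x * y) = d x * y + (-1) ^+ absz i *: (x * d y))]].

Record cdga := CDGA {
  cd_car : algType K;
  cd_deg : int -> pred cd_car;
  cd_d : cd_car -> cd_car;
  cd_ax : is_cdga cd_deg cd_d }.
Arguments cd_deg : clear implicits.
Arguments cd_d : clear implicits.

Definition is_cdga_hom (A B : cdga) (f : cd_car A -> cd_car B) : Prop :=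
  [/\ (forall (a : K) x y, f (a *: x + y) = a *: f x + f y),
      (forall x y, f (x * y) = f x * f y),
      f 1 = 1,
      (forall k x, x \in cd_deg A k -> f x \in cd_deg B k) &
      (forall x, f (cd_d A x) = cd_d B (f x))].

Record cdga_hom (A B : cdga) := CDGAHom {
  hom_fun : cd_car A -> cd_car B;
  hom_ax : is_cdga_hom hom_fun }.
Arguments hom_fun {A B}.

Definition cocycle {A : cdga} (k : int) (x : cd_car A) : Prop :=
  x \in cd_deg A k /\ cd_d A x = 0.
Definition coboundary {A : cdga} (k : int) (x : cd_car A) : Prop :=
  exists y, y \in cd_deg A (k - 1) /\ x = cd_d A y.

Definition quasi_iso (A B : cdga) (f : cdga_hom A B) : Prop :=
  forall k : int,
    (forall x, cocycle k x -> coboundary k (hom_fun f x) -> coboundary k x) /\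
    (forall z, cocycle k z -> exists x y, cocycle k x /\
        y \in cd_deg B (k - 1) /\ z = hom_fun f x + cd_d B y).

Definition fibration (A B : cdga) (f : cdga_hom A B) : Prop :=
  forall k z, z \in cd_deg B k -> exists x, x \in cd_deg A k /\ hom_fun f x = z.

Definition cofibrant (A : cdga) : Prop :=
  forall (B C : cdga) (p : cdga_hom B C) (f : cdga_hom A C),
    fibration p -> quasi_iso p ->
    exists g : cdga_hom A B, forall x, hom_fun p (hom_fun g x) = hom_fun f x.

Definition augmentation (A : cdga) (eps : cd_car A -> K) : Prop :=
  [/\ (forall (a : K) x y, eps (a *: x + y) = a * eps x + eps y),
      (forall x y, eps (x * y) = eps x * eps y),
      eps 1 = 1,
      (forall k x, k != 0 -> x \in cd_deg A k -> eps x = 0) &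
      (forall x, eps (cd_d A x) = 0)].

Definition cohom_vanishes (A : cdga) (k : int) : Prop :=
  forall x : cd_car A, cocycle k x -> coboundary k x.

Definition H0_is_ground (A : cdga) : Prop :=
  (forall a : K, coboundary 0 (a *: (1 : cd_car A)) -> a = 0) /\
  (forall x : cd_car A, cocycle 0 x -> exists (a : K) y,
       y \in cd_deg A (-1) /\ x = a *: 1 + cd_d A y).

(* The dg ideal generated by A^k and d(A^k), k < 0 (kernel of A -> tau# A) *)
Definition tau_gen {A : cdga} (g : cd_car A) : Prop :=
  exists k : int, k < 0 /\
    (g \in cd_deg A k \/ exists h, h \in cd_deg A k /\ g = cd_d A h).

Definition tau_ideal {A : cdga} (x : cd_car A) : Prop :=
  exists s : seq (cd_car A * cd_car A),
    (forall p, p \in s -> tau_gen p.2) /\ x = \sum_(p <- s) p.1 * p.2.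

(* The unit A -> iota tau# A = A / tau_ideal is a quasi-isomorphism,
   written out: H^k(A) -> H^k(A/I) is bijective for every k, where
   H^k(A/I) = {x in A^k | dx in I} / (I^k + d A^(k-1)). *)
Definition tau_unit_quasi_iso (A : cdga) : Prop :=
  forall k : int,
    (forall x : cd_car A, cocycle k x ->
       (exists y, y \in cd_deg A (k - 1) /\ tau_ideal (x - cd_d A y)) ->
       coboundary k x) /\
    (forall x, x \in cd_deg A k -> tau_ideal (cd_d A x) ->
       exists x' y, cocycle k x' /\ y \in cd_deg A (k - 1) /\
         tau_ideal (x - x' - cd_d A y)).

End CDGA.

(* Main.v *)
Set Warnings "-redundant-canonical-projection -notation-overridden -ambiguous-paths -projection-no-head-constant".
From HB Require Import structures.
From mathcomp Require Import all_boot all_order all_algebra.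
Require Import Defs.
From Stdlib Require Import ClassicalEpsilon.
Set Implicit Arguments. Unset Strict Implicit. Unset Printing Implicit Defensive.
Import Order.TTheory GRing.Theory Num.Theory.
Local Open Scope ring_scope.

Section Basic.
Variable K : fieldType.
Variable A : cdga K.
Local Notation R := (cd_car A).
Local Notation deg := (@cd_deg _ A).
Local Notation d := (@cd_d _ A).

Definition sgn (k : int) : K := (-1) ^+ absz k.

Lemma sgnE k : sgn k = (-1) ^ k.
Proof. by case: k => n //; rewrite /sgn /exprz /= invr_sign. Qed.

Lemma sgnD i j : sgn (i + j) = sgn i * sgn j.
Proof. by rewrite !sgnE exprzDr // unitrN1. Qed.

Lemma sgn_sq i : sgn i * sgn i = 1.
Proof. by rewrite /sgn -exprD -signr_odd oddD addbb. Qed.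

Lemma sgnN i : sgn (- i) = sgn i.
Proof. by rewrite /sgn abszN. Qed.

Lemma deg0 k : (0 : R) \in deg k.
Proof. by case: (cd_ax A) => /(_ k) []. Qed.

Lemma degZD k a (x y : R) : x \in deg k -> y \in deg k -> a *: x + y \in deg k.
Proof. by case: (cd_ax A) => /(_ k) [] _ H _ _ _ _; apply: H. Qed.

Lemma degD k (x y : R) : x \in deg k -> y \in deg k -> x + y \in deg k.
Proof. by move=> hx hy; have := degZD 1 hx hy; rewrite scale1r. Qed.

Lemma degZ k a (x : R) : x \in deg k -> a *: x \in deg k.
Proof. by move=> hx; have := degZD a hx (deg0 k); rewrite addr0. Qed.

Lemma degN k (x : R) : x \in deg k -> - x \in deg k.
Proof. by move=> hx; rewrite -scaleN1r degZ. Qed.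

Lemma degB k (x y : R) : x \in deg k -> y \in deg k -> x - y \in deg k.
Proof. by move=> hx hy; rewrite degD ?degN. Qed.

Lemma deg_sum k (I : Type) (r : seq I) (P : pred I) (F : I -> R) :
  (forall i, P i -> F i \in deg k) -> \sum_(i <- r | P i) F i \in deg k.
Proof. by move=> H; apply: (big_ind (fun z => z \in deg k)) => //; [exact: deg0 | exact: degD]. Qed.

Lemma deg_muln k (x : R) n : x \in deg k -> x *+ n \in deg k.
Proof. by move=> hx; elim: n => [|n IH]; rewrite ?mulr0n ?deg0 // mulrS degD. Qed.

Lemma dZD a (x y : R) : d (a *: x + y) = a *: d x + d y.
Proof. by case: (cd_ax A) => _ _ _ _ [H _ _ _]; apply: H. Qed.

Lemma dD (x y : R) : d (x + y) = d x + d y.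
Proof. by have := dZD 1 x y; rewrite !scale1r. Qed.

Lemma d0 : d 0 = 0.
Proof. by apply: (@addrI _ (d 0)); rewrite -dD !addr0. Qed.

Lemma dZ a (x : R) : d (a *: x) = a *: d x.
Proof. by have := dZD a x 0; rewrite !addr0 d0 addr0. Qed.

Lemma dN (x : R) : d (- x) = - d x.
Proof. by rewrite -scaleN1r dZ scaleN1r. Qed.

Lemma dB (x y : R) : d (x - y) = d x - d y.
Proof. by rewrite dD dN. Qed.

Lemma d_sum (I : Type) (r : seq I) (P : pred I) (F : I -> R) :
  d (\sum_(i <- r | P i) F i) = \sum_(i <- r | P i) d (F i).
Proof. exact: (big_morph d dD d0). Qed.

Lemma d_muln (x : R) n : d (x *+ n) = d x *+ n.
Proof. by elim: n => [|n IH]; rewrite ?mulr0n ?d0 // !mulrS dD IH. Qed.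

Lemma deg1 : (1 : R) \in deg 0.
Proof. by case: (cd_ax A) => _ _ _ [H _ _]. Qed.

Lemma degM i j (x y : R) : x \in deg i -> y \in deg j -> x * y \in deg (i + j).
Proof. by case: (cd_ax A) => _ _ _ [_ H _] _; apply: H. Qed.

Lemma commM i j (x y : R) : x \in deg i -> y \in deg j ->
  x * y = (-1) ^+ absz (i * j) *: (y * x).
Proof. by case: (cd_ax A) => _ _ _ [_ _ H] _; apply: H. Qed.

Lemma d_deg k (x : R) : x \in deg k -> d x \in deg (k + 1).
Proof. by case: (cd_ax A) => _ _ _ _ [_ H _ _]; apply: H. Qed.

Lemma dd (x : R) : d (d x) = 0.
Proof. by case: (cd_ax A) => _ _ _ _ [_ _ H _]; apply: H. Qed.

Lemma leib i (x y : R) : x \in deg i ->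
  d (x * y) = d x * y + sgn i *: (x * d y).
Proof. by case: (cd_ax A) => _ _ _ _ [_ _ _ H]; apply: H. Qed.

Lemma d1 : d 1 = 0.
Proof.
have H := leib 1 deg1; rewrite !mulr1 !mul1r /sgn /= expr0 scale1r in H.
by apply: (@addrI _ (d 1)); rewrite addr0 -H.
Qed.

Lemma dec_ex (x : R) : exists s f, (forall k, f k \in deg k) /\ x = \sum_(k <- s) f k.
Proof. by case: (cd_ax A) => _ H _ _ _; apply: H. Qed.

Lemma direct s (f : int -> R) : uniq s -> (forall k, f k \in deg k) ->
  \sum_(k <- s) f k = 0 -> forall k, k \in s -> f k = 0.
Proof. by case: (cd_ax A) => _ _ H _ _; apply: H. Qed.

Lemma dec_uniq (x : R) : exists sf : seq int * (int -> R),
  [/\ uniq sf.1, (forall k, sf.2 k \in deg k) & x = \sum_(k <- sf.1) sf.2 k].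
Proof.
have [s [f [hf ->]]] := dec_ex x.
exists (undup s, fun k => iterop (count_mem k s) +%R (f k) 0); split => //=.
- exact: undup_uniq.
- move=> k; rewrite Monoid.iteropE; elim: (count_mem k s) => [|n IH] /=.
    exact: deg0.
  exact: degD.
- by rewrite (big_undup_iterop_count +%R).
Qed.

Lemma sum_restrict (s u : seq int) (f : int -> R) : uniq s -> uniq u ->
  {subset s <= u} ->
  \sum_(k <- u) (if k \in s then f k else 0) = \sum_(k <- s) f k.
Proof.
move=> us uu su; rewrite -big_mkcond /= -big_filter.
apply: perm_big; apply: uniq_perm; rewrite ?filter_uniq // => k.
by rewrite mem_filter; case ks: (k \in s) => //=; rewrite su.
Qed.

Lemma hom_unique s s' (f f' : int -> R) : uniq s -> uniq s' ->
  (forall k, f k \in deg k) -> (forall k, f' k \in deg k) ->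
  \sum_(k <- s) f k = \sum_(k <- s') f' k ->
  forall k, (if k \in s then f k else 0) = (if k \in s' then f' k else 0).
Proof.
move=> us us' hf hf' E k.
pose u := undup (s ++ s').
have uu : uniq u by exact: undup_uniq.
pose g k := (if k \in s then f k else 0) - (if k \in s' then f' k else 0).
have hg : forall k, g k \in deg k.
  by move=> j; rewrite /g; apply: degB; case: ifP => _; rewrite ?deg0.
have sg : \sum_(k <- u) g k = 0.
  rewrite sumrB !sum_restrict // ?E ?subrr // => j hj;
  by rewrite mem_undup mem_cat hj ?orbT.
case ku : (k \in u).
  by apply/eqP; rewrite -subr_eq0; apply/eqP; exact: (direct uu hg sg ku).
move: ku; rewrite mem_undup mem_cat => /negbT; rewrite negb_or => /andP [/negbTE -> /negbTE ->].
done.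
Qed.

Definition decomp (x : R) := proj1_sig (constructive_indefinite_description _ (dec_uniq x)).
Definition supp (x : R) := (decomp x).1.
Definition comp (k : int) (x : R) : R := if k \in supp x then (decomp x).2 k else 0.

Lemma decompP x : [/\ uniq (decomp x).1, (forall k, (decomp x).2 k \in deg k) &
   x = \sum_(k <- (decomp x).1) (decomp x).2 k].
Proof. exact: proj2_sig (constructive_indefinite_description _ (dec_uniq x)). Qed.

Lemma supp_uniq x : uniq (supp x).
Proof. by case: (decompP x). Qed.

Lemma comp_deg k x : comp k x \in deg k.
Proof. by rewrite /comp; case: ifP => _; [case: (decompP x) | exact: deg0]. Qed.

Lemma comp_out k x : k \notin supp x -> comp k x = 0.
Proof. by rewrite /comp => /negbTE ->. Qed.

Lemma sum_comp x : x = \sum_(k <- supp x) comp k x.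
Proof.
case: (decompP x) => _ _ {1}->; apply: eq_big_seq => k hk.
by rewrite /comp hk.
Qed.

Lemma comp_eq s (f : int -> R) x : uniq s -> (forall k, f k \in deg k) ->
  x = \sum_(k <- s) f k -> forall k, comp k x = if k \in s then f k else 0.
Proof.
move=> us hf E k; case: (decompP x) => u1 h2 E2.
by rewrite -(hom_unique u1 us h2 hf) -?E2.
Qed.

Lemma comp_cover u x : uniq u -> (forall k, k \notin u -> comp k x = 0) ->
  x = \sum_(k <- u) comp k x.
Proof.
move=> uu hu.
have -> : \sum_(k <- u) comp k x = \sum_(k <- undup (u ++ supp x)) comp k x.
  rewrite -(sum_restrict (fun k => comp k x) uu (undup_uniq (u ++ supp x))); last first.
    by move=> k hk; rewrite mem_undup mem_cat hk.
  by apply: eq_bigr => k _; case: ifP => // /negbT /hu ->.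
rewrite {1}(sum_comp x) -(sum_restrict (fun k => comp k x) (supp_uniq x) (undup_uniq (u ++ supp x))); last first.
  by move=> k hk; rewrite mem_undup mem_cat hk orbT.
by apply: eq_bigr => k _; case: ifP => // /negbT /comp_out ->.
Qed.

Lemma comp_hom j x k : x \in deg j -> comp k x = if k == j then x else 0.
Proof.
move=> hx; rewrite (@comp_eq [:: j] (fun k => if k == j then x else 0) x) //.
- by rewrite inE; case: eqP.
- by move=> i; case: eqP => [->|]; rewrite ?deg0.
- by rewrite big_seq1 eqxx.
Qed.

Lemma compZD k a x y : comp k (a *: x + y) = a *: comp k x + comp k y.
Proof.
pose u := undup (supp x ++ supp y).
have uu : uniq u by exact: undup_uniq.
have hout : forall z, {subset supp z <= supp x ++ supp y} -> forall k, k \notin u -> comp k z = 0.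
  by move=> z sz j; rewrite mem_undup => hj; apply: comp_out; apply: contra hj; apply: sz.
have ox : forall k, k \notin u -> comp k x = 0.
  by apply: hout => i h; rewrite mem_cat h.
have oy : forall k, k \notin u -> comp k y = 0.
  by apply: hout => i h; rewrite mem_cat h orbT.
rewrite (@comp_eq u (fun k => a *: comp k x + comp k y) (a *: x + y) uu) //.
- by case: ifP => // /negbT hk; rewrite ox ?oy ?scaler0 ?addr0.
- by move=> i; rewrite degZD ?comp_deg.
- by rewrite big_split /= -scaler_sumr -!comp_cover.
Qed.

Lemma compD k x y : comp k (x + y) = comp k x + comp k y.
Proof. by have := compZD k 1 x y; rewrite !scale1r. Qed.

Lemma comp0 k : comp k 0 = 0.
Proof. by rewrite (comp_hom (j:=0)) ?deg0 //; case: eqP. Qed.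

Lemma compZ k a x : comp k (a *: x) = a *: comp k x.
Proof. by rewrite -[a *: x]addr0 compZD comp0 addr0. Qed.

Lemma compN k x : comp k (- x) = - comp k x.
Proof. by rewrite -scaleN1r compZ scaleN1r. Qed.

Lemma comp_sum k (I : Type) (r : seq I) (P : pred I) (F : I -> R) :
  comp k (\sum_(i <- r | P i) F i) = \sum_(i <- r | P i) comp k (F i).
Proof. exact: (big_morph (comp k) (compD k) (comp0 k)). Qed.

Lemma comp_comp k j x : comp k (comp j x) = if k == j then comp j x else 0.
Proof. exact: comp_hom (comp_deg j x). Qed.

Lemma comp_d k x : comp k (d x) = d (comp (k - 1) x).
Proof.
rewrite {1}(sum_comp x) d_sum comp_sum.
rewrite (eq_bigr (fun j => if k == j + 1 then d (comp j x) else 0)); last first.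
  by move=> j _; rewrite (comp_hom (j:=j + 1)) // d_deg // comp_deg.
case hk: (k - 1 \in supp x).
  rewrite (bigD1_seq (k - 1)) ?supp_uniq //= subrK eqxx big1 ?addr0 // => j hj.
  by rewrite ifF //; apply: contraNF hj => /eqP ->; rewrite addrK.
rewrite comp_out ?hk // d0 big1_seq // => j /andP [_ hjs].
by case: eqP => // hj; move: hk; rewrite hj addrK hjs.
Qed.

Lemma comp_mul k x y : comp k (x * y) =
  \sum_(i <- supp x) \sum_(j <- supp y) (if i + j == k then comp i x * comp j y else 0).
Proof.
rewrite {1}(sum_comp x) {1}(sum_comp y) mulr_suml comp_sum; apply: eq_bigr => i _.
rewrite mulr_sumr comp_sum; apply: eq_bigr => j _.
rewrite (comp_hom (j:=i + j)) ?degM ?comp_deg //.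
by rewrite eq_sym.
Qed.

End Basic.

Section Sg.
Variable K : fieldType.
Variable A : cdga K.
Local Notation R := (cd_car A).
Local Notation deg := (@cd_deg _ A).
Local Notation d := (@cd_d _ A).
Local Notation comp := (@comp _ A).
Local Notation supp := (@supp _ A).
Local Notation sgn := (@sgn K).

Definition sg (x : R) : R := \sum_(k <- supp x) sgn k *: comp k x.

Lemma sum_cover (F : int -> R -> R) u x : uniq u -> (forall k, F k 0 = 0) ->
  (forall k, k \notin u -> comp k x = 0) ->
  \sum_(k <- u) F k (comp k x) = \sum_(k <- supp x) F k (comp k x).
Proof.
move=> uu F0 hu.
rewrite -(sum_restrict (fun k => F k (comp k x)) uu (undup_uniq (u ++ supp x))); last first.
  by move=> k hk; rewrite mem_undup mem_cat hk.
rewrite -(sum_restrict (fun k => F k (comp k x)) (supp_uniq x) (undup_uniq (u ++ supp x))); last first.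
  by move=> k hk; rewrite mem_undup mem_cat hk orbT.
apply: eq_bigr => k _; case: ifP => hk1; case: ifP => hk2 //.
- by rewrite comp_out ?hk2 // F0.
- by rewrite hu ?hk1 // F0.
Qed.

Lemma sg_hom j x : x \in deg j -> sg x = sgn j *: x.
Proof.
move=> hx; rewrite /sg -(@sum_cover (fun k y => sgn k *: y) [:: j]) //.
- by rewrite big_seq1 (comp_hom (j:=j)) // eqxx.
- by move=> k; rewrite scaler0.
- by move=> k; rewrite inE => hk; rewrite (comp_hom (j:=j)) // ifN.
Qed.

Lemma sgZD a x y : sg (a *: x + y) = a *: sg x + sg y.
Proof.
pose u := undup (supp x ++ supp y).
have uu : uniq u by exact: undup_uniq.
have hout : forall z, {subset supp z <= supp x ++ supp y} -> forall k, k \notin u -> comp k z = 0.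
  by move=> z sz j; rewrite mem_undup => hj; apply: comp_out; apply: contra hj; apply: sz.
have ox : forall k, k \notin u -> comp k x = 0.
  by apply: hout => i h; rewrite mem_cat h.
have oy : forall k, k \notin u -> comp k y = 0.
  by apply: hout => i h; rewrite mem_cat h orbT.
have F0 : forall k, sgn k *: (0 : R) = 0 by move=> k; rewrite scaler0.
rewrite /sg -!(@sum_cover (fun k y => sgn k *: y) u) //; last first.
  by move=> k hk; rewrite compZD ox ?oy ?scaler0 ?addr0.
rewrite scaler_sumr -big_split /=; apply: eq_bigr => k _.
by rewrite compZD scalerDr !scalerA mulrC.
Qed.

Lemma sgD x y : sg (x + y) = sg x + sg y.
Proof. by have := sgZD 1 x y; rewrite !scale1r. Qed.

Lemma sg0 : sg 0 = 0.
Proof. by rewrite (sg_hom (deg0 A 0)) scaler0. Qed.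

Lemma sgZ a x : sg (a *: x) = a *: sg x.
Proof. by have := sgZD a x 0; rewrite !addr0 sg0 addr0. Qed.

Lemma sgN x : sg (- x) = - sg x.
Proof. by rewrite -scaleN1r sgZ scaleN1r. Qed.

Lemma sgB x y : sg (x - y) = sg x - sg y.
Proof. by rewrite sgD sgN. Qed.

Lemma sg_sum (I : Type) (r : seq I) (F : I -> R) :
  sg (\sum_(i <- r) F i) = \sum_(i <- r) sg (F i).
Proof. exact: (big_morph sg sgD sg0). Qed.

Lemma sg1 : sg 1 = 1.
Proof. by rewrite (sg_hom (deg1 A)) /sgn expr0 scale1r. Qed.

Lemma sgM x y : sg (x * y) = sg x * sg y.
Proof.
rewrite [sg x]/sg [sg y]/sg {1}(sum_comp x) {1}(sum_comp y) mulr_suml sg_sum mulr_suml.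
apply: eq_bigr => i _; rewrite mulr_sumr sg_sum mulr_sumr; apply: eq_bigr => j _.
rewrite (sg_hom (j:=i + j)) ?degM ?comp_deg // sgnD.
by rewrite -scalerAl -scalerAr scalerA.
Qed.

Lemma sg_deg k x : x \in deg k -> sg x \in deg k.
Proof. by move=> hx; rewrite (sg_hom hx) degZ. Qed.

Definition psc (c : K) (P : {poly R}) : {poly R} := (c%:A)%:P * P.

Lemma coef_psc c P i : (psc c P)`_i = c *: P`_i.
Proof. by rewrite /psc coefCM mulr_algl. Qed.

Lemma pmap_coef (f : R -> R) P i : f 0 = 0 -> (map_poly f P)`_i = f P`_i.
Proof. exact: coef_map_id0. Qed.

Lemma pmapD (f : R -> R) P Q : f 0 = 0 -> (forall x y, f (x + y) = f x + f y) ->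
  map_poly f (P + Q) = map_poly f P + map_poly f Q.
Proof. by move=> f0 fD; apply/polyP => i; rewrite coefD !pmap_coef // coefD fD. Qed.

Lemma pmap_sgM P Q : map_poly sg (P * Q) = map_poly sg P * map_poly sg Q.
Proof.
apply/polyP => i; rewrite pmap_coef ?sg0 // !coefM sg_sum.
by apply: eq_bigr => j _; rewrite sgM !pmap_coef ?sg0.
Qed.

Lemma pmap_sg1 : map_poly sg 1 = 1.
Proof. by apply/polyP => i; rewrite pmap_coef ?sg0 // !coefC; case: eqP; rewrite ?sg1 ?sg0. Qed.

Implicit Types P Q : {poly R}.
Definition pdeg k (P : {poly R}) := forall i, P`_i \in deg k.

Lemma pdeg_sg k P : pdeg k P -> map_poly sg P = psc (sgn k) P.
Proof. by move=> hP; apply/polyP => i; rewrite pmap_coef ?sg0 // coef_psc (sg_hom (hP i)). Qed.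

Lemma pdegM i j P Q : pdeg i P -> pdeg j Q -> pdeg (i + j) (P * Q).
Proof. by move=> hP hQ n; rewrite coefM deg_sum // => m _; rewrite degM. Qed.

Lemma pdegD k P Q : pdeg k P -> pdeg k Q -> pdeg k (P + Q).
Proof. by move=> hP hQ n; rewrite coefD degD. Qed.

Lemma pdegZ k c P : pdeg k P -> pdeg k (psc c P).
Proof. by move=> hP n; rewrite coef_psc degZ. Qed.

Lemma pdeg_d k P : pdeg k P -> pdeg (k + 1) (map_poly d P).
Proof. by move=> hP n; rewrite pmap_coef ?d0 // d_deg. Qed.

Lemma pdeg_deriv k P : pdeg k P -> pdeg k P^`().
Proof. by move=> hP n; rewrite coef_deriv deg_muln. Qed.

Lemma pscM c P Q : psc c (P * Q) = psc c P * Q.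
Proof. by rewrite /psc mulrA. Qed.

Lemma psc_central c P : P * (c%:A)%:P = (c%:A)%:P * P.
Proof. by apply/polyP => i; rewrite coefMC coefCM mulr_algl mulr_algr. Qed.

Lemma pscMr c P Q : psc c (P * Q) = P * psc c Q.
Proof. by rewrite /psc mulrA -psc_central mulrA. Qed.

Lemma pscA a b P : psc a (psc b P) = psc (a * b) P.
Proof. by apply/polyP => i; rewrite !coef_psc scalerA. Qed.

Lemma pscD c P Q : psc c (P + Q) = psc c P + psc c Q.
Proof. by rewrite /psc mulrDr. Qed.

Lemma pscDl a b P : psc (a + b) P = psc a P + psc b P.
Proof. by apply/polyP => i; rewrite coefD !coef_psc scalerDl. Qed.

Lemma psc1 P : psc 1 P = P.
Proof. by apply/polyP => i; rewrite coef_psc scale1r. Qed.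

Lemma pmap_sg_psc c P : map_poly sg (psc c P) = psc c (map_poly sg P).
Proof. by apply/polyP => i; rewrite !(pmap_coef, coef_psc) ?sg0 // sgZ. Qed.

Lemma pmap_d_psc c P : map_poly d (psc c P) = psc c (map_poly d P).
Proof. by apply/polyP => i; rewrite !(pmap_coef, coef_psc) ?d0 // dZ. Qed.

Lemma pleib k P Q : pdeg k P ->
  map_poly d (P * Q) = map_poly d P * Q + psc (sgn k) (P * map_poly d Q).
Proof.
move=> hP; apply/polyP => n.
rewrite pmap_coef ?d0 // coefD coef_psc !coefM d_sum scaler_sumr -big_split /=.
by apply: eq_bigr => j _; rewrite (leib _ (hP j)) !pmap_coef ?d0.
Qed.

Lemma pcomm i j P Q : pdeg i P -> pdeg j Q -> P * Q = psc (sgn (i * j)) (Q * P).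
Proof.
move=> hP hQ; apply/polyP => n.
rewrite coef_psc coefM coefMr scaler_sumr; apply: eq_bigr => m _.
exact: commM.
Qed.

Lemma pmap_d_deriv P : map_poly d P^`() = (map_poly d P)^`().
Proof. by apply/polyP => i; rewrite coef_deriv !pmap_coef ?d0 // coef_deriv d_muln. Qed.

Lemma pdd P : map_poly d (map_poly d P) = 0.
Proof. by apply/polyP => i; rewrite !pmap_coef ?d0 // dd coef0. Qed.

Lemma pmap_dD P Q : map_poly d (P + Q) = map_poly d P + map_poly d Q.
Proof. by apply: pmapD; [exact: d0 | exact: dD]. Qed.

Lemma pmap_sgD P Q : map_poly sg (P + Q) = map_poly sg P + map_poly sg Q.
Proof. by apply: pmapD; [exact: sg0 | exact: sgD]. Qed.

Lemma pmap_dN P : map_poly d (- P) = - map_poly d P.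
Proof. by apply/polyP => i; rewrite coefN !pmap_coef ?d0 // coefN dN. Qed.

Lemma pmap_d0 : map_poly d 0 = 0.
Proof. by rewrite map_poly0. Qed.

Lemma horner1 P n : (size P <= n)%N -> P.[1] = \sum_(i < n) P`_i.
Proof. by move=> h; rewrite (horner_coef_wide 1 h); apply: eq_bigr => i _; rewrite expr1n mulr1. Qed.

Lemma horner1_map (f : R -> R) P : f 0 = 0 -> (forall x y, f (x + y) = f x + f y) ->
  (map_poly f P).[1] = f P.[1].
Proof.
move=> f0 fD.
have hs : (size (map_poly f P) <= size P)%N by exact: size_poly.
rewrite (horner1 hs) (horner1 (leqnn _)) (big_morph f fD f0); apply: eq_bigr => i _.
by rewrite pmap_coef.
Qed.

Lemma horner1M P Q : (P * Q).[1] = P.[1] * Q.[1].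
Proof. by rewrite hornerM_comm // /comm_poly mulr1 mul1r. Qed.

End Sg.

Section TRing.
Variable K : fieldType.
Variable A : cdga K.
Local Notation R := (cd_car A).
Local Notation deg := (@cd_deg _ A).
Local Notation d := (@cd_d _ A).
Local Notation comp := (@comp _ A).
Local Notation supp := (@supp _ A).
Local Notation sgn := (@sgn K).
Local Notation sg := (@sg _ A).
Local Notation psc := (@psc _ A).
Implicit Types P Q : {poly R}.

Definition T := ({poly R} * {poly R})%type.
HB.instance Definition _ := Choice.copy T ({poly R} * {poly R})%type.
HB.instance Definition _ := GRing.Zmodule.copy T ({poly R} * {poly R})%type.

Definition tmul (x y : T) : T := (x.1 * y.1, map_poly sg x.1 * y.2 + x.2 * y.1).
Definition tone : T := (1, 0).

Lemma tmulA : associative tmul.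
Proof.
move=> [P1 Q1] [P2 Q2] [P3 Q3]; rewrite /tmul /=; congr (_, _); first by rewrite mulrA.
by rewrite pmap_sgM mulrDr mulrDl !mulrA addrA.
Qed.

Lemma tmul1l : left_id tone tmul.
Proof. by move=> [P Q]; rewrite /tmul /= pmap_sg1 !mul1r mul0r addr0. Qed.

Lemma tmul1r : right_id tone tmul.
Proof. by move=> [P Q]; rewrite /tmul /= mulr0 add0r !mulr1. Qed.

Lemma tmulDl : left_distributive tmul +%R.
Proof.
move=> [P1 Q1] [P2 Q2] [P3 Q3]; rewrite /tmul /=; congr (_, _); first by rewrite mulrDl.
by rewrite pmap_sgD !mulrDl addrACA.
Qed.

Lemma tmulDr : right_distributive tmul +%R.
Proof.
move=> [P1 Q1] [P2 Q2] [P3 Q3]; rewrite /tmul /=; congr (_, _); first by rewrite mulrDr.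
by rewrite !mulrDr addrACA.
Qed.

Lemma tone_neq0 : tone != 0.
Proof. by apply/eqP => /(congr1 fst) /= /eqP; rewrite oner_eq0. Qed.

HB.instance Definition _ := GRing.Zmodule_isNzRing.Build T tmulA tmul1l tmul1r tmulDl tmulDr tone_neq0.

Definition tscale (c : K) (x : T) : T := (psc c x.1, psc c x.2).

Lemma tscaleA a b v : tscale a (tscale b v) = tscale (a * b) v.
Proof. by rewrite /tscale /= !pscA. Qed.

Lemma tscale1 : left_id 1 tscale.
Proof. by move=> [P Q]; rewrite /tscale /= !psc1. Qed.

Lemma tscaleDr : right_distributive tscale +%R.
Proof. by move=> c [P1 Q1] [P2 Q2]; rewrite /tscale /= !pscD. Qed.

Lemma tscaleDl v : {morph tscale^~ v : a b / a + b}.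
Proof. by move=> a b; rewrite /tscale /= !pscDl. Qed.

HB.instance Definition _ := GRing.Zmodule_isLmodule.Build K T tscaleA tscale1 tscaleDr tscaleDl.

Lemma tscaleAl (a : K) (u v : T) : a *: (u * v) = (a *: u) * v.
Proof.
case: u v => [P1 Q1] [P2 Q2]; rewrite /GRing.scale /= /tscale /GRing.mul /= /tmul /=.
by rewrite pmap_sg_psc pscD !pscM.
Qed.

HB.instance Definition _ := GRing.Lmodule_isLalgebra.Build K T tscaleAl.

Lemma tscaleAr (a : K) (u v : T) : a *: (u * v) = u * (a *: v).
Proof.
case: u v => [P1 Q1] [P2 Q2]; rewrite /GRing.scale /= /tscale /GRing.mul /= /tmul /=.
by rewrite pscD !pscMr.
Qed.

HB.instance Definition _ := GRing.Lalgebra_isAlgebra.Build K T tscaleAr.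


End TRing.

Section Intg.
Variable K : fieldType.
Hypothesis charK0 : [pchar K] =i pred0.
Variable A : cdga K.
Local Notation R := (cd_car A).
Local Notation deg := (@cd_deg _ A).
Local Notation d := (@cd_d _ A).
Local Notation pdeg := (@pdeg _ A).
Local Notation psc := (@psc _ A).
Implicit Types P Q : {poly R}.

Lemma natK_neq0 n : (n.+1%:R : K) != 0.
Proof. by move/pcharf0P: charK0 => ->. Qed.

Definition intg Q : {poly R} :=
  \poly_(i < (size Q).+1) (if i is n.+1 then (n.+1%:R : K)^-1 *: Q`_n else 0).

Lemma coef_intg Q i : (intg Q)`_i = if i is n.+1 then (n.+1%:R : K)^-1 *: Q`_n else 0.
Proof.
rewrite coef_poly; case: i => [|n] //=; rewrite ltnS.
by case: ltnP => // h; rewrite nth_default ?scaler0.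
Qed.

Lemma intg_coef0 Q : (intg Q)`_0 = 0.
Proof. by rewrite coef_intg. Qed.

Lemma intg_deriv Q : (intg Q)^`() = Q.
Proof.
apply/polyP => i; rewrite coef_deriv coef_intg -scaler_nat scalerA mulfV ?scale1r //.
exact: natK_neq0.
Qed.

Lemma deriv_intg P : intg (P^`()) = P - (P`_0)%:P.
Proof.
apply/polyP => i; rewrite coef_intg coefB coefC; case: i => [|n] /=; first by rewrite subrr.
by rewrite subr0 coef_deriv -scaler_nat scalerA mulVf ?scale1r //; exact: natK_neq0.
Qed.

Lemma intgD Q1 Q2 : intg (Q1 + Q2) = intg Q1 + intg Q2.
Proof. by apply/polyP => i; rewrite coefD !coef_intg; case: i => [|n]; rewrite ?addr0 // coefD scalerDr. Qed.

Lemma intgN Q : intg (- Q) = - intg Q.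
Proof. by apply/polyP => i; rewrite coefN !coef_intg; case: i => [|n]; rewrite ?oppr0 // coefN scalerN. Qed.

Lemma intgB Q1 Q2 : intg (Q1 - Q2) = intg Q1 - intg Q2.
Proof. by rewrite intgD intgN. Qed.

Lemma intg_d Q : map_poly d (intg Q) = intg (map_poly d Q).
Proof.
apply/polyP => i; rewrite coef_map_id0 ?d0 // !coef_intg; case: i => [|n]; first exact: d0.
by rewrite coef_map_id0 ?d0 // dZ.
Qed.

Lemma pdeg_intg k Q : pdeg k Q -> pdeg k (intg Q).
Proof. by move=> hQ i; rewrite coef_intg; case: i => [|n]; rewrite ?deg0 ?degZ. Qed.

Lemma intg_eval_in (S : R -> Prop) Q : S 0 -> (forall x y, S x -> S y -> S (x + y)) ->
  (forall (a : K) x, S x -> S (a *: x)) -> (forall i, S Q`_i) -> S (intg Q).[1].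
Proof.
move=> S0 SD SZ hQ; rewrite (horner1 (leqnn _)).
elim/big_ind: _ => // i _; rewrite coef_intg; case: (nat_of_ord i) => [|n] //.
exact: SZ.
Qed.

End Intg.

Section XDef.
Variable K : fieldType.
Variable A : cdga K.
Local Notation R := (cd_car A).
Local Notation deg := (@cd_deg _ A).
Local Notation d := (@cd_d _ A).
Local Notation comp := (@comp _ A).
Local Notation supp := (@supp _ A).
Local Notation sgn := (@sgn K).
Local Notation sg := (@sg _ A).
Local Notation psc := (@psc _ A).
Local Notation pdeg := (@pdeg _ A).
Local Notation T := (@T _ A).
Implicit Types P Q : {poly R}.

Record spred := SPred {
  sp : pred R;
  sp0 : 0 \in sp;
  sp1 : 1 \in sp;
  spZD : forall a x y, x \in sp -> y \in sp -> a *: x + y \in sp;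
  spM : forall x y, x \in sp -> y \in sp -> x * y \in sp;
  sp_d : forall x, x \in sp -> d x \in sp;
  sp_comp : forall k x, x \in sp -> comp k x \in sp }.

Variable Sb : spred.
Local Notation Sp := (sp Sb).
Let Sp0 := @sp0 Sb.
Let Sp1 := @sp1 Sb.
Let SpZD := @spZD Sb.
Let SpM := @spM Sb.
Let Sp_d := @sp_d Sb.
Let Sp_comp := @sp_comp Sb.

Definition XP : pred T := fun x => x.1`_0 \in Sp.

Lemma tmul1 (x y : T) : (x * y).1 = x.1 * y.1. Proof. by []. Qed.
Lemma tmul2 (x y : T) : (x * y).2 = map_poly sg x.1 * y.2 + x.2 * y.1. Proof. by []. Qed.
Lemma tscale_1 a (x : T) : (a *: x).1 = psc a x.1. Proof. by []. Qed.
Lemma tscale_2 a (x : T) : (a *: x).2 = psc a x.2. Proof. by []. Qed.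
Lemma tadd1 (x y : T) : (x + y).1 = x.1 + y.1. Proof. by []. Qed.
Lemma tadd2 (x y : T) : (x + y).2 = x.2 + y.2. Proof. by []. Qed.
Lemma topp1 (x : T) : (- x).1 = - x.1. Proof. by []. Qed.
Lemma topp2 (x : T) : (- x).2 = - x.2. Proof. by []. Qed.
Lemma tone1 : (1 : T).1 = 1. Proof. by []. Qed.
Lemma tone2 : (1 : T).2 = 0. Proof. by []. Qed.
Lemma tzero1 : (0 : T).1 = 0. Proof. by []. Qed.
Lemma tzero2 : (0 : T).2 = 0. Proof. by []. Qed.

Lemma Xclosed : GRing.subsemialg_closed XP.
Proof.
split.
- by rewrite /XP unfold_in /= coefC eqxx.
- split; first by rewrite /XP unfold_in /= coef0.
  move=> x y; rewrite /XP !unfold_in /= coefD => hx hy.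
  by have := SpZD 1 hx hy; rewrite scale1r.
- move=> a x; rewrite /XP !unfold_in /= coef_psc => hx.
  by have := SpZD a hx Sp0; rewrite addr0.
- by move=> x y; rewrite /XP !unfold_in /= coef0M => hx hy; apply: SpM.
Qed.

Record X := MkX { xval : T; xvalP : xval \in XP }.
HB.instance Definition _ := [isSub for xval].
HB.instance Definition _ := [Choice of X by <:].
HB.instance Definition _ := GRing.SubChoice_isSubAlgebra.Build K T XP X Xclosed.

Lemma xval_add (x y : X) : xval (x + y) = xval x + xval y. Proof. by []. Qed.
Lemma xval_mul (x y : X) : xval (x * y) = xval x * xval y. Proof. by []. Qed.
Lemma xval_scale a (x : X) : xval (a *: x) = a *: xval x. Proof. by []. Qed.
Lemma xval_one : xval 1 = 1. Proof. by []. Qed.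
Lemma xval_zero : xval 0 = 0. Proof. by []. Qed.
Lemma xval_opp (x : X) : xval (- x) = - xval x. Proof. by []. Qed.

End XDef.

Section XCdga.
Variable K : fieldType.
Variable A : cdga K.
Variable Sb : spred A.
Local Notation R := (cd_car A).
Local Notation deg := (@cd_deg _ A).
Local Notation d := (@cd_d _ A).
Local Notation comp := (@comp _ A).
Local Notation supp := (@supp _ A).
Local Notation sgn := (@sgn K).
Local Notation sg := (@sg _ A).
Local Notation psc := (@psc _ A).
Local Notation pdeg := (@pdeg _ A).
Local Notation T := (@T _ A).
Local Notation X := (X Sb).
Local Notation Xpred := (XP Sb).
Local Notation Sp := (sp Sb).
Implicit Types P Q : {poly R}.


Definition pdegb k P : bool := all (fun c => c \in deg k) P.

Lemma pdegP k P : reflect (pdeg k P) (pdegb k P).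
Proof.
apply: (iffP allP) => [h i | h c /(nthP 0) [i hi <-]]; last exact: h.
case: (ltnP i (size P)) => hi; first by apply: h; apply: mem_nth.
by rewrite nth_default ?deg0.
Qed.

Definition degX k : pred X := fun x => pdegb k (xval x).1 && pdegb (k - 1) (xval x).2.

Lemma degXP k x : reflect (pdeg k (xval x).1 /\ pdeg (k - 1) (xval x).2) (x \in degX k).
Proof.
rewrite unfold_in /degX.
by apply: (iffP andP) => [[/pdegP ? /pdegP ?] | [/pdegP ? /pdegP ?]]; split.
Qed.

Lemma pdeg0 k : pdeg k 0.
Proof. by move=> i; rewrite coef0 deg0. Qed.

Lemma sum_fst (I : Type) (r : seq I) (F : I -> T) : (\sum_(i <- r) F i).1 = \sum_(i <- r) (F i).1.
Proof. by elim: r => [|a r IH]; rewrite ?big_nil ?big_cons //= -IH. Qed.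

Lemma sum_snd (I : Type) (r : seq I) (F : I -> T) : (\sum_(i <- r) F i).2 = \sum_(i <- r) (F i).2.
Proof. by elim: r => [|a r IH]; rewrite ?big_nil ?big_cons //= -IH. Qed.

Lemma sum_xval (I : Type) (r : seq I) (F : I -> X) : xval (\sum_(i <- r) F i) = \sum_(i <- r) xval (F i).
Proof. by elim: r => [|a r IH]; rewrite ?big_nil ?big_cons //= -IH. Qed.

Lemma degX_sub k : 0 \in degX k /\ (forall (a : K) x y, x \in degX k -> y \in degX k -> a *: x + y \in degX k).
Proof.
split; first by apply/degXP; split; apply: pdeg0.
move=> a x y /degXP [h1 h2] /degXP [h3 h4]; apply/degXP; split => /=.
  exact: pdegD (pdegZ _ h1) h3.
exact: pdegD (pdegZ _ h2) h4.
Qed.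

Definition cover P : seq int := flatten [seq supp P`_i | i <- iota 0 (size P)].

Lemma cover_out P k i : k \notin cover P -> comp k P`_i = 0.
Proof.
move=> hk; case: (ltnP i (size P)) => hi; last by rewrite nth_default ?comp0.
apply: comp_out; apply: contra hk => hk; apply/flatten_mapP; exists i => //.
by rewrite mem_iota add0n hi.
Qed.

Definition compT k (t : T) : T := (map_poly (comp k) t.1, map_poly (comp (k - 1)) t.2).

Lemma compT_X k t : t \in Xpred -> compT k t \in Xpred.
Proof. by rewrite !unfold_in /XP /= coef_map_id0 ?comp0 //; apply: sp_comp. Qed.

Definition fX k (x : X) : X := MkX (compT_X k (xvalP x)).

Lemma fX_deg k x : fX k x \in degX k.
Proof. by apply/degXP; split => i /=; rewrite coef_map_id0 ?comp0 ?comp_deg. Qed.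

Lemma subK1 : injective (fun k : int => k - 1).
Proof. by move=> a b /(congr1 (fun z => z + 1)); rewrite !subrK. Qed.

Lemma X_decomp (x : X) : exists s f, (forall k, f k \in degX k) /\ x = \sum_(k <- s) f k.
Proof.
case: x => [[P Q] hx].
pose s := undup (cover P ++ map (fun j => j + 1) (cover Q)).
have us : uniq s by exact: undup_uniq.
exists s, (fun k => fX k (MkX hx)); split; first by move=> k; apply: fX_deg.
apply: val_inj => /=; rewrite sum_xval; apply: injective_projections => /=.
  rewrite sum_fst; apply/polyP => i; rewrite coef_sum /=.
  rewrite [in LHS](@comp_cover _ _ s (P`_i)) //; first by apply: eq_bigr => k _; rewrite coef_map_id0 ?comp0.
  move=> k hk; apply: cover_out; apply: contra hk => hk.
  by rewrite mem_undup mem_cat hk.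
rewrite sum_snd; apply/polyP => i; rewrite coef_sum /=.
rewrite (eq_bigr (fun k => comp (k - 1) Q`_i)); last by move=> k _; rewrite coef_map_id0 ?comp0.
rewrite -(big_map (fun k => k - 1) xpredT (fun j => comp j Q`_i)).
apply: comp_cover; first by rewrite map_inj_uniq //; exact: subK1.
move=> j hj; apply: cover_out; apply: contra hj => hj.
apply/mapP; exists (j + 1); last by rewrite addrK.
by rewrite mem_undup mem_cat; apply/orP; right; apply: map_f.
Qed.

Lemma X_direct s (f : int -> X) : uniq s -> (forall k, f k \in degX k) ->
  \sum_(k <- s) f k = 0 -> forall k, k \in s -> f k = 0.
Proof.
move=> us hf hs k ks.
have hs1 : \sum_(k <- s) (xval (f k)).1 = 0 by rewrite -sum_fst -sum_xval hs.
have hs2 : \sum_(k <- s) (xval (f k)).2 = 0 by rewrite -sum_snd -sum_xval hs.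
apply: val_inj => /=; apply: injective_projections => /=; apply/polyP => n; rewrite coef0.
  have := @direct _ A s (fun k => (xval (f k)).1`_n) us.
  apply => // [j|]; first by case/degXP: (hf j).
  by rewrite -coef_sum hs1 coef0.
have H := @direct _ A (map (fun k => k - 1) s) (fun j => (xval (f (j + 1))).2`_n).
have := H _ _ _ (k - 1); rewrite subrK; apply.
- by rewrite map_inj_uniq //; exact: subK1.
- by move=> j; case/degXP: (hf (j + 1)); rewrite addrK.
- rewrite big_map (eq_bigr (fun k => (xval (f k)).2`_n)); last by move=> j _; rewrite subrK.
  by rewrite -coef_sum hs2 coef0.
- by apply/map_f.
Qed.

End XCdga.

Section XCdga2.
Variable K : fieldType.
Variable A : cdga K.
Variable Sb : spred A.
Local Notation R := (cd_car A).
Local Notation deg := (@cd_deg _ A).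
Local Notation d := (@cd_d _ A).
Local Notation comp := (@comp _ A).
Local Notation sgn := (@sgn K).
Local Notation sg := (@sg _ A).
Local Notation psc := (@psc _ A).
Local Notation pdeg := (@pdeg _ A).
Local Notation T := (@T _ A).
Local Notation X := (X Sb).
Local Notation Xpred := (XP Sb).
Local Notation degX := (@degX _ A Sb).
Implicit Types P Q : {poly R}.

Lemma xval_inj : injective (@xval _ A Sb).
Proof. exact: val_inj. Qed.

Lemma pdegB k P Q : pdeg k P -> pdeg k Q -> pdeg k (P - Q).
Proof. by move=> hP hQ n; rewrite coefB degB. Qed.

Lemma pdeg_sgmap k P : pdeg k P -> pdeg k (map_poly sg P).
Proof. by move=> hP n; rewrite coef_map_id0 ?sg0 // sg_deg. Qed.

Lemma deriv_psc c P : (psc c P)^`() = psc c P^`().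
Proof. by apply/polyP => i; rewrite coef_deriv !coef_psc coef_deriv scalerMnr. Qed.

Lemma pscN c P : psc (- c) P = - psc c P.
Proof. by apply/polyP => i; rewrite coefN !coef_psc scaleNr. Qed.

Lemma psc_sq i P : psc (sgn i) (psc (sgn i) P) = P.
Proof. by rewrite pscA sgn_sq psc1. Qed.

Lemma pscB c P Q : psc c (P - Q) = psc c P - psc c Q.
Proof. by rewrite /psc mulrBr. Qed.

Lemma pmap_dB P Q : map_poly d (P - Q) = map_poly d P - map_poly d Q.
Proof. by rewrite pmap_dD pmap_dN. Qed.

Lemma sgn1 : sgn 1 = -1.
Proof. by rewrite /sgn expr1. Qed.

Lemma X_mul : [/\ (1 : X) \in degX 0,
  (forall i j (x y : X), x \in degX i -> y \in degX j -> x * y \in degX (i + j)) &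
  (forall i j (x y : X), x \in degX i -> y \in degX j ->
     x * y = (-1) ^+ absz (i * j) *: (y * x))].
Proof.
split.
- apply/degXP; split => n /=; last by rewrite coef0 deg0.
  by rewrite coefC; case: eqP => _; rewrite ?deg1 ?deg0.
- move=> i j x y /degXP [h1 h2] /degXP [h3 h4]; apply/degXP; split => /=.
    exact: pdegM.
  apply: pdegD.
    by have := pdegM (pdeg_sgmap h1) h4; rewrite addrA.
  by have := pdegM h2 h3; rewrite addrAC.
- move=> i j x y /degXP [h1 h2] /degXP [h3 h4]; apply: xval_inj.
  rewrite /=.
  case: (xval x) h1 h2 => P1 Q1 /= h1 h2; case: (xval y) h3 h4 => P2 Q2 /= h3 h4.
  apply: injective_projections => /=; first exact: pcomm.
  rewrite (pdeg_sg h1) (pdeg_sg h3) pscD -!pscM -/(sgn (i * j)).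
  rewrite (pcomm h1 h4) (pcomm h2 h3) pscA addrC.
  have e1 : sgn i * sgn (i * (j - 1)) = sgn (i * j).
    by rewrite mulrBr mulr1 sgnD sgnN mulrC -mulrA sgn_sq mulr1.
  have e2 : sgn ((i - 1) * j) = sgn (i * j) * sgn j.
    by rewrite mulrBl mul1r sgnD sgnN.
  by rewrite e1 e2 -pscA.
Qed.

Definition DT (t : T) : T := (map_poly d t.1, t.1^`() - map_poly d t.2).

Lemma DT_X t : t \in Xpred -> DT t \in Xpred.
Proof. by rewrite !unfold_in /XP /= coef_map_id0 ?d0 //; apply: sp_d. Qed.

Definition dX (x : X) : X := MkX (DT_X (xvalP x)).

Lemma xval_dX x : xval (dX x) = DT (xval x). Proof. by []. Qed.

Lemma zmod_id1 (V : zmodType) (f g a b c e : V) :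
  f + g - (a + b) - (c + e) = - a + (f - c) + (g - b - e).
Proof.
rewrite !opprD !addrA; congr (_ - _).
rewrite [LHS]addrAC; congr (_ - _).
rewrite [RHS]addrAC; congr (_ - _).
by rewrite [LHS]addrAC [- a + f]addrC.
Qed.

Lemma X_d : [/\ (forall (a : K) (x y : X), dX (a *: x + y) = a *: dX x + dX y),
  (forall k x, x \in degX k -> dX x \in degX (k + 1)),
  (forall x, dX (dX x) = 0) &
  (forall i (x y : X), x \in degX i ->
     dX (x * y) = dX x * y + (-1) ^+ absz i *: (x * dX y))].
Proof.
split.
- move=> a x y; apply: xval_inj; rewrite /= ?xval_add ?xval_dX ?xval_scale.
  case: (xval x) => P1 Q1; case: (xval y) => P2 Q2; rewrite /DT /=.
  apply: injective_projections => /=; first by rewrite pmap_dD pmap_d_psc.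
  rewrite derivD deriv_psc pmap_dD pmap_d_psc pscB.
  by rewrite opprD addrACA.
- move=> k x /degXP [h1 h2]; apply/degXP; rewrite ?xval_dX /DT /=; split.
    exact: pdeg_d.
  rewrite addrK; apply: pdegB; first exact: pdeg_deriv.
  by have := pdeg_d h2; rewrite subrK.
- move=> x; apply: xval_inj; rewrite /= ?xval_dX ?xval_zero.
  case: (xval x) => P Q; rewrite /DT /=.
  by rewrite pdd pmap_dB pmap_d_deriv pdd subr0 subrr.
- move=> i x y /degXP [h1 h2]; apply: xval_inj.
  rewrite /= ?xval_add ?xval_dX ?xval_mul ?xval_scale ?xval_mul ?xval_dX.
  case: (xval x) h1 h2 => P1 Q1 /= h1 h2; case: (xval y) => P2 Q2.
  rewrite /DT /=; apply: injective_projections => /=; first exact: pleib.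
  have hs := pdeg_sg h1.
  have h1' : pdeg i (map_poly sg P1) by exact: pdeg_sgmap.
  have E1 : map_poly d (map_poly sg P1 * Q2) =
      psc (sgn i) (map_poly d P1 * Q2) + P1 * map_poly d Q2.
    by rewrite (pleib _ h1') hs pmap_d_psc -!pscM psc_sq.
  have E2 : map_poly d (Q1 * P2) = map_poly d Q1 * P2 + - psc (sgn i) (Q1 * map_poly d P2).
    by rewrite (pleib _ h2) sgnD sgnN sgn1 mulrN1 pscN.
  have E3 : map_poly sg (map_poly d P1) * Q2 = - psc (sgn i) (map_poly d P1 * Q2).
    by rewrite (pdeg_sg (pdeg_d h1)) sgnD sgn1 mulrN1 pscN mulNr pscM.
  have E4 : psc ((-1) ^+ `|i|) (map_poly sg P1 * (P2^`() - map_poly d Q2) + Q1 * map_poly d P2)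
      = P1 * P2^`() - P1 * map_poly d Q2 - - psc (sgn i) (Q1 * map_poly d P2).
    by rewrite -/(sgn i) hs pscD -pscM psc_sq mulrBr opprK.
  rewrite derivM pmap_dD E1 E2 E3 E4 mulrBl.
  by rewrite opprD addrA; apply: zmod_id1.
Qed.

End XCdga2.

Section XHom.
Variable K : fieldType.
Hypothesis charK0 : [pchar K] =i pred0.
Variable A : cdga K.
Variable Sb : spred A.
Local Notation R := (cd_car A).
Local Notation deg := (@cd_deg _ A).
Local Notation d := (@cd_d _ A).
Local Notation sgn := (@sgn K).
Local Notation psc := (@psc _ A).
Local Notation pdeg := (@pdeg _ A).
Local Notation T := (@T _ A).
Local Notation X := (X Sb).
Local Notation Xpred := (XP Sb).
Local Notation degX := (@degX _ A Sb).
Local Notation dX := (@dX _ A Sb).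
Local Notation DT := (@DT _ A).
Local Notation Sp := (sp Sb).
Local Notation intg := (@intg K A).
Implicit Types P Q : {poly R}.

Lemma X_ax : is_cdga degX dX.
Proof.
split.
- move=> k; exact: degX_sub.
- exact: X_decomp.
- exact: X_direct.
- exact: X_mul.
- exact: X_d.
Qed.

Definition Xc : cdga K := CDGA X_ax.

Definition pX (x : X) : R := (xval x).1.[1].

Lemma horner1_psc c P : (psc c P).[1] = c *: P.[1].
Proof. by rewrite /psc hornerCM mulr_algl. Qed.

Lemma pdeg_eval k P : pdeg k P -> P.[1] \in deg k.
Proof. by move=> hP; rewrite (horner1 (leqnn _)) deg_sum. Qed.

Lemma pX_hom : is_cdga_hom (A := Xc) (B := A) pX.
Proof.
split.
- by move=> a x y; rewrite /pX /= hornerD horner1_psc.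
- by move=> x y; rewrite /pX /= horner1M.
- by rewrite /pX /= hornerC.
- by move=> k x /degXP [h1 _]; exact: pdeg_eval.
- by move=> x; rewrite /pX /= horner1_map //; [exact: d0 | exact: dD].
Qed.

Definition pH : cdga_hom Xc A := CDGAHom pX_hom.

Lemma mkX_proof (s : R) (Q : {poly R}) : s \in Sp -> (s%:P + Q * 'X, 0) \in Xpred.
Proof. by move=> hs; rewrite unfold_in /XP /= coefD coefC coefMX /= addr0. Qed.

Lemma pH_fib : fibration pH.
Proof.
move=> k z hz.
exists (MkX (mkX_proof (z%:P) (sp0 Sb))); split.
  apply/degXP; split => i /=; last by rewrite coef0 deg0.
  by rewrite coefD coefC coefMX coefC; case: i => [|[|i]] /=; rewrite ?add0r ?addr0 ?deg0.
by rewrite /= /pX /= hornerD hornerC hornerMX hornerC mulr1 add0r.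
Qed.

Lemma intg0 : intg 0 = 0.
Proof. by apply/polyP => i; rewrite coef_intg coef0; case: i => [|n] //; rewrite coef0 scaler0. Qed.

Definition hT (t : T) : T := (intg t.2, 0).

Lemma DTD (t u : T) : DT (t + u) = DT t + DT u.
Proof.
case: t u => [P1 Q1] [P2 Q2]; rewrite /DT /=.
apply: injective_projections => /=; first by rewrite pmap_dD.
by rewrite derivD pmap_dD opprD addrACA.
Qed.

Lemma DTN (t : T) : DT (- t) = - DT t.
Proof.
case: t => [P Q]; rewrite /DT /=.
apply: injective_projections => /=; first by rewrite pmap_dN.
by rewrite derivN pmap_dN opprD.
Qed.

Lemma DTC (c : R) : DT (c%:P, 0) = ((d c)%:P, 0).
Proof.
rewrite /DT /=; apply: injective_projections => /=; last by rewrite derivC map_poly0 subr0.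
by apply/polyP => i; rewrite coef_map_id0 ?d0 // !coefC; case: eqP => // _; rewrite d0.
Qed.

Lemma homotopy (t : T) : t.1`_0 = 0 -> t = DT (hT t) + hT (DT t).
Proof.
case: t => [P Q] /= h0; rewrite /DT /hT /=.
apply: injective_projections => /=; last by rewrite (intg_deriv charK0) map_poly0 subr0 addr0.
rewrite intg_d intgB (deriv_intg charK0) h0 subr0.
by rewrite addrC subrK.
Qed.

Lemma coef0_X (x : X) : (xval x).1`_0 \in Sp.
Proof. by have := xvalP x; rewrite unfold_in. Qed.

Hypothesis SQ1 : forall k s, s \in Sp -> s \in deg k -> d s = 0 ->
  (exists a, a \in deg (k - 1) /\ s = d a) ->
  exists s', [/\ s' \in Sp, s' \in deg (k - 1) & s = d s'].
Hypothesis SQ2 : forall k z, z \in deg k -> d z = 0 ->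
  exists s a, [/\ s \in Sp, s \in deg k, d s = 0, a \in deg (k - 1) & z = s + d a].

Lemma pH_qi : quasi_iso pH.
Proof.
move=> k; split.
- move=> x [/degXP [h1 h2] hdx] [a [ha hpa]].
  move: hpa; rewrite /= /pX.
  have hx0 := coef0_X x.
  case E: (xval x) h1 h2 hdx hx0 => [P Q] /= h1 h2 hdx hx0 hpa.
  have hDT : DT (P, Q) = 0.
    by have hdx' : dX x = 0 := hdx; rewrite -E -xval_dX hdx'.
  set s0 := P`_0.
  have ds0 : d s0 = 0.
    by move: (congr1 (fun t : T => t.1`_0) hDT); rewrite /DT /= coef_map_id0 ?coef0 //; exact: d0.
  pose g : T := (P - s0%:P, Q).
  have g0 : g.1`_0 = 0 by rewrite /= coefB coefC subrr.
  have Dg : DT g = 0.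
    have eg : g = (P, Q) + - ((s0%:P, 0) : T).
      by rewrite /g; apply: injective_projections => //=; rewrite oppr0 addr0.
    rewrite eg DTD DTN DTC ds0 hDT polyC0 add0r.
    by apply: injective_projections => /=; rewrite oppr0.
  have hg := homotopy g0; rewrite Dg /hT /= intg0 in hg.
  have hP : P = s0%:P + map_poly d (intg Q).
    have := congr1 fst hg; rewrite /= /DT /= => h.
    by rewrite -[map_poly d (intg Q)]addr0 -h addrC subrK.
  have hIQ : pdeg (k - 1) (intg Q) by exact: pdeg_intg.
  have [s' [hs'1 hs'2 hs'3]] : exists s', [/\ s' \in Sp, s' \in deg (k - 1) & s0 = d s'].
    apply: SQ1 => //; first exact: h1.
    exists (a - (intg Q).[1]); split; first by rewrite degB // pdeg_eval.
    rewrite dB -hpa hP hornerD hornerC horner1_map; [by rewrite addrK | exact: d0 | exact: dD].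
  have hy : (s'%:P + intg Q * 'X^0, 0) \in Xpred.
    by rewrite unfold_in /XP /= coefD coefC mulr1 intg_coef0 // addr0.
  exists (MkX hy); split.
    apply/degXP; split => i /=; last by rewrite coef0 deg0.
    by rewrite mulr1 coefD coefC degD //; case: eqP; rewrite ?deg0.
  apply: xval_inj; rewrite E /= /DT /= mulr1.
  apply: injective_projections => /=; last first.
    by rewrite derivD derivC add0r (intg_deriv charK0) map_poly0 subr0.
  rewrite pmap_dD hP hs'3; congr (_ + _).
  by apply/polyP => i; rewrite coef_map_id0 ?d0 // !coefC; case: eqP; rewrite ?d0.
- move=> z [hz dz].
  have [s [a [hs1 hs2 hs3 ha ->]]] := SQ2 hz dz.
  have hy : (s%:P + 0 * 'X, 0) \in Xpred by exact: mkX_proof.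
  exists (MkX hy), a; split => //; last by rewrite /= /pX /= mul0r addr0 hornerC.
  split.
    apply/degXP; split => i /=; last by rewrite coef0 deg0.
    by rewrite mul0r addr0 coefC; case: eqP; rewrite ?deg0.
  apply: xval_inj; rewrite xval_dX /= /DT /= mul0r addr0 derivC map_poly0 subr0.
  apply: injective_projections => //=.
  by apply/polyP => i; rewrite coef_map_id0 ?d0 // !coefC; case: eqP => _; rewrite ?hs3 ?d0.
Qed.

End XHom.

Section TauIdeal.
Variable K : fieldType.
Variable A : cdga K.
Local Notation R := (cd_car A).
Local Notation deg := (@cd_deg _ A).
Local Notation d := (@cd_d _ A).
Local Notation ti := (@tau_ideal _ A).

Lemma ti0 : ti 0.
Proof. by exists [::]; rewrite big_nil. Qed.

Lemma tiD x y : ti x -> ti y -> ti (x + y).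
Proof.
move=> [s [hs ->]] [s' [hs' ->]]; exists (s ++ s'); split; last by rewrite big_cat.
by move=> p; rewrite mem_cat => /orP [] ?; [apply: hs | apply: hs'].
Qed.

Lemma tiMl c x : ti x -> ti (c * x).
Proof.
move=> [s [hs ->]]; exists [seq (c * p.1, p.2) | p <- s]; split.
  by move=> p /mapP [q hq ->] /=; apply: hs.
by rewrite big_map mulr_sumr; apply: eq_bigr => p _; rewrite mulrA.
Qed.

Lemma tiZ (a : K) x : ti x -> ti (a *: x).
Proof. by move=> h; rewrite -mulr_algl; apply: tiMl. Qed.

Lemma tiN x : ti x -> ti (- x).
Proof. by move=> h; rewrite -scaleN1r; apply: tiZ. Qed.

Lemma tiB x y : ti x -> ti y -> ti (x - y).
Proof. by move=> hx hy; apply: tiD => //; apply: tiN. Qed.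

Lemma ti_gen g : tau_gen g -> ti g.
Proof.
move=> h; exists [:: (1, g)]; split; last by rewrite big_seq1 mul1r.
by move=> p; rewrite inE => /eqP ->.
Qed.

Lemma ti_sum (I : Type) (r : seq I) (F : I -> R) : (forall i, ti (F i)) -> ti (\sum_(i <- r) F i).
Proof. by move=> h; apply: (big_ind ti) => //; [exact: ti0 | exact: tiD]. Qed.

Lemma ti_sum_seq (I : eqType) (r : seq I) (F : I -> R) :
  (forall i, i \in r -> ti (F i)) -> ti (\sum_(i <- r) F i).
Proof. by move=> h; rewrite big_seq; apply: (big_ind ti) => //; [exact: ti0 | exact: tiD]. Qed.

Lemma ti_deg k x : k < 0 -> x \in deg k -> ti x.
Proof. by move=> hk hx; apply: ti_gen; exists k; split => //; left. Qed.

Lemma ti_d k h : k < 0 -> h \in deg k -> ti (d h).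
Proof. by move=> hk hh; apply: ti_gen; exists k; split => //; right; exists h. Qed.

Lemma ltK1 (k : int) : k < 0 -> k - 1 < 0.
Proof. by move=> hk; apply: lt_trans hk; rewrite ltrBlDr ltrDl ltr01. Qed.

End TauIdeal.

Section Main.
Variable K : fieldType.
Hypothesis charK0 : [pchar K] =i pred0.
Variable A : cdga K.
Variable Sb : spred A.
Local Notation R := (cd_car A).
Local Notation deg := (@cd_deg _ A).
Local Notation d := (@cd_d _ A).
Local Notation pdeg := (@pdeg _ A).
Local Notation T := (@T _ A).
Local Notation X := (X Sb).
Local Notation degX := (@degX _ A Sb).
Local Notation dX := (@dX _ A Sb).
Local Notation DT := (@DT _ A).
Local Notation Sp := (sp Sb).
Local Notation intg := (@intg K A).
Local Notation ti := (@tau_ideal _ A).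
Implicit Types P Q : {poly R}.

Hypothesis SN : forall k s, k < 0 -> s \in Sp -> s \in deg k -> s = 0.

Variable g : cdga_hom A (Xc Sb).
Hypothesis hpg : forall x, pX (hom_fun g x) = x.

Local Notation G := (hom_fun g).

Lemma G_ax : is_cdga_hom G. Proof. exact: hom_ax. Qed.

Lemma GZD a x y : G (a *: x + y) = a *: G x + G y.
Proof. by case: G_ax => H _ _ _ _; apply: H. Qed.

Lemma G0 : G 0 = 0.
Proof.
have h := GZD 1 0 0; rewrite !scale1r !addr0 in h.
by apply: (@addrI _ (G 0)); rewrite addr0 -h.
Qed.

Lemma GD x y : G (x + y) = G x + G y.
Proof. by have := GZD 1 x y; rewrite !scale1r. Qed.

Lemma GN x : G (- x) = - G x.
Proof. by have := GZD (-1) x 0; rewrite addr0 G0 addr0 !scaleN1r. Qed.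

Lemma GM x y : G (x * y) = G x * G y.
Proof. by case: G_ax => _ H _ _ _; apply: H. Qed.

Lemma Gdeg k x : x \in deg k -> G x \in degX k.
Proof. by case: G_ax => _ _ _ H _; apply: H. Qed.

Lemma Gd x : G (d x) = dX (G x).
Proof. by case: G_ax => _ _ _ _ H; apply: H. Qed.

Lemma G_sum (I : Type) (r : seq I) (F : I -> R) : G (\sum_(i <- r) F i) = \sum_(i <- r) G (F i).
Proof. by elim: r => [|a r IH]; rewrite ?big_nil ?G0 // !big_cons GD IH. Qed.

Definition rr x := (xval (G x)).1`_0.

Lemma rrD x y : rr (x + y) = rr x + rr y.
Proof. by rewrite /rr GD /= coefD. Qed.

Lemma rr0 : rr 0 = 0.
Proof. by rewrite /rr G0 /= coef0. Qed.

Lemma rrM x y : rr (x * y) = rr x * rr y.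
Proof. by rewrite /rr GM /= coef0M. Qed.

Lemma rrd x : rr (d x) = d (rr x).
Proof. by rewrite /rr Gd /= coef_map_id0 //; exact: d0. Qed.

Lemma rr_deg k x : x \in deg k -> rr x \in deg k.
Proof. by move=> /Gdeg /degXP [h _]; apply: h. Qed.

Lemma rrN x : rr (- x) = - rr x.
Proof. by rewrite /rr GN /= coefN. Qed.

Lemma rr_neg k x : k < 0 -> x \in deg k -> rr x = 0.
Proof. by move=> hk hx; apply: (SN hk (coef0_X _) (rr_deg hx)). Qed.

Lemma rr_ti x : ti x -> rr x = 0.
Proof.
move=> [s [hs ->]].
rewrite (big_morph rr rrD rr0) big1_seq // => p /andP [_ hp].
rewrite rrM; have [k [hk [hg | [h [hh ->]]]]] := hs p hp.
  by rewrite (rr_neg hk hg) mulr0.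
by rewrite rrd (rr_neg hk hh) d0 mulr0.
Qed.

Lemma gen_coef b : tau_gen b -> forall i, ti (xval (G b)).1`_i /\ ti (xval (G b)).2`_i.
Proof.
move=> [k [hk [hb | [h [hh ->]]]]] i.
  have /degXP [h1 h2] := Gdeg hb; split; first exact: ti_deg hk (h1 i).
  exact: ti_deg (ltK1 hk) (h2 i).
rewrite Gd xval_dX /DT /=.
have /degXP [h1 h2] := Gdeg hh; split.
  by rewrite coef_map_id0 ?d0 //; apply: ti_d hk (h1 i).
rewrite coefB coef_deriv coef_map_id0 ?d0 //; apply: tiB.
  by apply: ti_deg hk _; apply: deg_muln.
exact: ti_d (ltK1 hk) (h2 i).
Qed.

Lemma ideal_coef z : ti z -> forall i, ti (xval (G z)).2`_i.
Proof.
move=> [s [hs ->]] i.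
rewrite G_sum sum_xval sum_snd coef_sum; apply: ti_sum_seq => p hp.
rewrite GM /= coefD !coefM.
have hc := gen_coef (hs p hp).
apply: tiD; apply: ti_sum => j; apply: tiMl.
  exact: (hc _).2.
exact: (hc _).1.
Qed.

Lemma zmod_id2 (V : zmodType) (a b c : V) : a + b + (c - a - b) = c.
Proof. by rewrite -[c - a - b]addrA -opprD [_ + (c - _)]addrC subrK. Qed.

Lemma key x : x = rr x + d ((intg (xval (G x)).2).[1]) + (intg (xval (G (d x))).2).[1].
Proof.
rewrite Gd xval_dX /rr.
rewrite -{1}(hpg x) /pX.
case: (xval (G x)) => P Q /=.
rewrite intgB (deriv_intg charK0) -intg_d hornerD hornerN hornerD hornerN hornerC.
rewrite horner1_map; [ | exact: d0 | exact: dD].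
by rewrite zmod_id2.
Qed.

Lemma main_qi : tau_unit_quasi_iso A.
Proof.
move=> k; split.
- move=> x [hx dx] [y [hy hxy]].
  have e := key x; rewrite dx G0 /= intg0 horner0 addr0 in e.
  have hr : rr x = d (rr y).
    have := rr_ti hxy; rewrite rrD rrN rrd => /eqP; rewrite subr_eq0 => /eqP.
    done.
  have /degXP [_ hQ] := Gdeg hx.
  exists (rr y + (intg (xval (G x)).2).[1]); split.
    by apply: degD; [exact: rr_deg | exact: pdeg_eval (pdeg_intg hQ)].
  by rewrite {1}e hr dD.
- move=> x hx hdx.
  have /degXP [_ hQ] := Gdeg hx.
  exists (rr x), ((intg (xval (G x)).2).[1]); split.
  + split; first exact: rr_deg.
    by rewrite -rrd rr_ti.
  + split; first exact: pdeg_eval (pdeg_intg hQ).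
    have e := key x.
    have -> : x - rr x - d (intg (xval (G x)).2).[1] = (intg (xval (G (d x))).2).[1].
      by rewrite {1}e [_ + _ + (intg _).[1]]addrC -addrA -opprD addrK.
    apply: intg_eval_in; [exact: ti0 | exact: tiD | exact: tiZ | exact: ideal_coef].
Qed.

End Main.

From mathcomp Require Import boolp classical_sets.

Section Compl.
Variable K : fieldType.
Variable A : cdga K.
Local Notation R := (cd_car A).
Local Notation deg := (@cd_deg _ A).
Local Notation d := (@cd_d _ A).

Definition Pw (V : set R) : Prop :=
  [/\ (forall v, V v -> v \in deg 1),
      (forall (a : K) x y, V x -> V y -> V (a *: x + y)) &
      (forall v a0, V v -> a0 \in deg 0 -> v = d a0 -> v = 0)].

Lemma complement_exists : exists W : set R,
  [/\ (forall w, W w -> w \in deg 1),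
      (forall (a : K) x y, W x -> W y -> W (a *: x + y)),
      W 0,
      (forall w a0, W w -> a0 \in deg 0 -> w = d a0 -> w = 0) &
      (forall a, a \in deg 1 -> exists w a0, [/\ W w, a0 \in deg 0 & a = w + d a0])].
Proof.
have [V [[V1 V2 V3] Vmax]] : exists V, Pw V /\ forall B, proper V B -> ~ Pw B.
  apply: Zorn_bigcup => F FP Ftot; split.
  - by move=> v [X FX Xv]; case: (FP X FX) => H _ _; apply: H.
  - move=> a x y [X FX Xx] [Y FY Yy].
    case: (Ftot X Y FX FY) => [XY|YX].
      exists Y => //; case: (FP Y FY) => _ H _; apply: H => //; exact: XY.
    exists X => //; case: (FP X FX) => _ H _; apply: H => //; exact: YX.
  - by move=> v a0 [X FX Xv]; case: (FP X FX) => _ _ H; apply: H.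
have V0 : V 0.
  apply: contrapT => nV0.
  have Vempty : forall x, ~ V x.
    by move=> x Vx; apply: nV0; have := V2 (-1) x x Vx Vx; rewrite scaleN1r addNr.
  apply: (Vmax (fun z => z = 0)).
    split; first by move=> x /Vempty.
    by move=> /(_ 0 erefl) /Vempty.
  split.
  - by move=> v ->; exact: deg0.
  - by move=> a x y -> ->; rewrite scaler0 addr0.
  - by move=> v a0 ->.
exists V; split => //.
move=> a ha; apply: contrapT => hna.
have hna' : forall w a0, V w -> a0 \in deg 0 -> a <> w + d a0.
  by move=> w a0 Vw ha0 E; apply: hna; exists w, a0; split.
pose B : set R := fun z => exists w (c : K), V w /\ z = w + c *: a.
apply: (Vmax B).
  split; first by move=> x Vx; exists x, 0; split => //; rewrite scale0r addr0.
  move=> BV; have [w [c [Vw E]]] : B a by exists 0, 1; split => //; rewrite scale1r add0r.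
  have Va : V a by apply: BV; exists 0, 1; split => //; rewrite scale1r add0r.
  by apply: (hna' a 0 Va (deg0 A 0)); rewrite d0 addr0.
split.
- move=> v [w [c [Vw ->]]]; apply: degD; [exact: V1 | exact: degZ].
- move=> b x y [w1 [c1 [Vw1 ->]]] [w2 [c2 [Vw2 ->]]].
  exists (b *: w1 + w2), (b * c1 + c2); split; first exact: V2.
  by rewrite scalerDr addrACA scalerDl scalerA.
- move=> v a0 [w [c [Vw ->]]] ha0 E.
  have [c0|cn0] := eqVneq c 0.
    by move: E; rewrite c0 scale0r addr0 => E; rewrite (V3 w a0 Vw ha0 E).
  exfalso; apply: (hna' ((- c^-1) *: w) (c^-1 *: a0)).
  - by rewrite -[_ *: w]addr0; apply: V2.
  - exact: degZ.
  - rewrite dZ -E scalerDr scalerA mulVf // scale1r scaleNr.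
    by rewrite addrA [- _ + _]addrC subrr add0r.
Qed.

End Compl.

From mathcomp Require Import zify.

Section SDef.
Variable K : fieldType.
Variable A : cdga K.
Local Notation R := (cd_car A).
Local Notation deg := (@cd_deg _ A).
Local Notation d := (@cd_d _ A).
Local Notation comp := (@comp _ A).
Local Notation supp := (@supp _ A).

Variable W : R -> Prop.
Hypothesis W1 : forall w, W w -> w \in deg 1.
Hypothesis W2 : forall (a : K) x y, W x -> W y -> W (a *: x + y).
Hypothesis W0 : W 0.
Hypothesis W3 : forall w a0, W w -> a0 \in deg 0 -> w = d a0 -> w = 0.
Hypothesis W4 : forall a, a \in deg 1 -> exists w a0, [/\ W w, a0 \in deg 0 & a = w + d a0].

Lemma WZ (a : K) x : W x -> W (a *: x).
Proof. by move=> h; rewrite -[a *: x]addr0; apply: W2. Qed.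

Lemma WD x y : W x -> W y -> W (x + y).
Proof. by move=> hx hy; rewrite -[x]scale1r; apply: W2. Qed.

Definition Sprop (x : R) : Prop :=
  [/\ forall k, k < 0 -> comp k x = 0, exists c : K, comp 0 x = c *: 1 & W (comp 1 x)].

Definition Sp : pred R := fun x => `[< Sprop x >].

Lemma SpP x : reflect (Sprop x) (x \in Sp).
Proof. by rewrite unfold_in; apply: asboolP. Qed.

Lemma Sprop_hom m a : a \in deg m -> (m < 0 -> a = 0) ->
  (m = 0 -> exists c : K, a = c *: 1) -> (m = 1 -> W a) -> Sprop a.
Proof.
move=> ha h1 h2 h3; split.
- move=> k hk; rewrite (comp_hom (j:=m)) //; case: eqP => // e.
  by apply: h1; rewrite -e.
- rewrite (comp_hom (j:=m)) //; case: eqP => [e|_]; first by apply: h2.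
  by exists 0; rewrite scale0r.
- by rewrite (comp_hom (j:=m)) //; case: eqP => [e|_]; [apply: h3 | ].
Qed.

Lemma Sp0 : 0 \in Sp.
Proof. by apply/SpP; apply: (@Sprop_hom 0) => //; [exact: deg0 | exists 0; rewrite scale0r]. Qed.

Lemma Sp1 : 1 \in Sp.
Proof. by apply/SpP; apply: (@Sprop_hom 0) => //; [exact: deg1 | exists 1; rewrite scale1r]. Qed.

Lemma SpZD a x y : x \in Sp -> y \in Sp -> a *: x + y \in Sp.
Proof.
move=> /SpP [hx1 [cx hx0] hx2] /SpP [hy1 [cy hy0] hy2]; apply/SpP; split.
- by move=> k hk; rewrite compZD hx1 // hy1 // scaler0 addr0.
- by exists (a * cx + cy); rewrite compZD hx0 hy0 scalerDl scalerA.
- by rewrite compZD; apply: W2.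
Qed.

Lemma SpM x y : x \in Sp -> y \in Sp -> x * y \in Sp.
Proof.
move=> /SpP [hx1 [cx hx0] hx2] /SpP [hy1 [cy hy0] hy2]; apply/SpP; split.
- move=> k hk; rewrite comp_mul big1 // => i _; rewrite big1 // => j _.
  case: eqP => // e.
  have [hi|hi] := ltP i 0; first by rewrite hx1 // mul0r.
  have [hj|hj] := ltP j 0; first by rewrite hy1 // mulr0.
  exfalso; lia.
- rewrite comp_mul.
  apply: (big_ind (fun z => exists c : K, z = c *: 1)); first by exists 0; rewrite scale0r.
    by move=> _ _ [c1 ->] [c2 ->]; exists (c1 + c2); rewrite scalerDl.
  move=> i _.
  apply: (big_ind (fun z => exists c : K, z = c *: 1)); first by exists 0; rewrite scale0r.
    by move=> _ _ [c1 ->] [c2 ->]; exists (c1 + c2); rewrite scalerDl.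
  move=> j _; case: eqP => e; last by exists 0; rewrite scale0r.
  have [hi|hi] := ltP i 0; first by exists 0; rewrite hx1 // mul0r scale0r.
  have [hj|hj] := ltP j 0; first by exists 0; rewrite hy1 // mulr0 scale0r.
  have -> : i = 0 by lia.
  have -> : j = 0 by lia.
  by exists (cx * cy); rewrite hx0 hy0 -scalerAl mul1r scalerA.
- rewrite comp_mul.
  apply: (big_ind W) => //; first exact: WD.
  move=> i _; apply: (big_ind W) => //; first exact: WD.
  move=> j _; case: eqP => e //.
  have [hi|hi] := ltP i 0; first by rewrite hx1 // mul0r.
  have [hj|hj] := ltP j 0; first by rewrite hy1 // mulr0.
  have [[-> ->]|[-> ->]] : (i = 0 /\ j = 1) \/ (i = 1 /\ j = 0) by lia.
    by rewrite hx0 -scalerAl mul1r; apply: WZ.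
  by rewrite hy0 -scalerAr mulr1; apply: WZ.
Qed.

Lemma Sp_d x : x \in Sp -> d x \in Sp.
Proof.
move=> /SpP [hx1 [cx hx0] hx2]; apply/SpP; split.
- move=> k hk; rewrite comp_d hx1 ?d0 //; lia.
- by exists 0; rewrite comp_d hx1 ?d0 ?scale0r.
- by rewrite comp_d subrr hx0 dZ d1 scaler0.
Qed.

Lemma Sp_comp k x : x \in Sp -> comp k x \in Sp.
Proof.
move=> /SpP [hx1 [cx hx0] hx2]; apply/SpP; split.
- move=> j hj; rewrite comp_comp; case: eqP => // <-; exact: hx1.
- rewrite comp_comp; case: eqP => [<-|_]; first by exists cx.
  by exists 0; rewrite scale0r.
- by rewrite comp_comp; case: eqP => [<-|_].
Qed.

Definition Sb : spred A := SPred Sp0 Sp1 SpZD SpM Sp_d Sp_comp.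

Lemma SN k s : k < 0 -> s \in sp Sb -> s \in deg k -> s = 0.
Proof.
move=> hk /SpP [h1 _ _] hs.
by rewrite -(h1 k hk) (comp_hom (j:=k)) // eqxx.
Qed.

Lemma deg_high_S m a : 2 <= m -> a \in deg m -> a \in sp Sb.
Proof. move=> hm ha; apply/SpP; apply: (Sprop_hom ha) => e; exfalso; lia. Qed.

Lemma W_S w : W w -> w \in sp Sb.
Proof.
move=> hw; apply/SpP; apply: (Sprop_hom (W1 hw)) => // e; exfalso; lia.
Qed.

Hypothesis hneg : forall k : int, k < 0 -> cohom_vanishes A k.
Hypothesis h0 : H0_is_ground A.

Lemma SQ1 k s : s \in sp Sb -> s \in deg k -> d s = 0 ->
  (exists a, a \in deg (k - 1) /\ s = d a) ->
  exists s', [/\ s' \in sp Sb, s' \in deg (k - 1) & s = d s'].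
Proof.
move=> hS hs ds [a [ha e]]; subst s.
have zero : d a = 0 -> exists s', [/\ s' \in sp Sb, s' \in deg (k - 1) & d a = d s'].
  by move=> ->; exists 0; split; [exact: Sp0 | exact: deg0 | rewrite d0].
have : k < 0 \/ k = 0 \/ k = 1 \/ k = 2 \/ 3 <= k by lia.
case=> [hk|[hk|[hk|[hk|hk]]]].
- by apply: zero; apply: (SN hk hS hs).
- subst k; apply: zero.
  move/SpP: hS => [_ [c hc] _].
  have e : d a = c *: 1 by rewrite -hc (comp_hom (j:=0)) // eqxx.
  have c0 : c = 0 by apply: h0.1; exists a; split.
  by rewrite e c0 scale0r.
- subst k; apply: zero.
  move/SpP: hS => [_ _ hw].
  have e : comp 1 (d a) = d a by rewrite (comp_hom (j:=1)) // eqxx.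
  by rewrite e in hw; apply: (W3 hw ha).
- subst k; move: ha; rewrite (_ : (2 - 1 : int) = 1) // => ha.
  have [w [a0 [hw ha0 ->]]] := W4 ha.
  exists w; split; [exact: W_S | exact: W1 | by rewrite dD dd addr0].
- exists a; split => //; apply: (deg_high_S (m := k - 1)) => //; lia.
Qed.

Lemma SQ2 k z : z \in deg k -> d z = 0 ->
  exists s a, [/\ s \in sp Sb, s \in deg k, d s = 0, a \in deg (k - 1) & z = s + d a].
Proof.
move=> hz dz.
have : k < 0 \/ k = 0 \/ k = 1 \/ 2 <= k by lia.
case=> [hk|[hk|[hk|hk]]].
- have [a [ha ->]] := hneg hk (conj hz dz).
  by exists 0, a; split; rewrite ?add0r ?d0 //; [exact: Sp0 | exact: deg0].
- subst k; have [c [y [hy ->]]] := h0.2 z (conj hz dz).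
  exists (c *: 1), y; split => //.
  + by apply/SpP; apply: (@Sprop_hom 0) => //; [exact: degZ (deg1 A) | exists c].
  + exact: degZ (deg1 A).
  + by rewrite dZ d1 scaler0.
- subst k; have [w [a0 [hw ha0 e]]] := W4 hz.
  exists w, a0; split => //; first exact: W_S.
  + exact: W1.
  + by have := congr1 d e; rewrite dz dD dd addr0 => <-.
- exists z, 0; split => //; first exact: deg_high_S hz.
  + exact: deg0.
  + by rewrite d0 addr0.
Qed.

End SDef.

Unset Implicit Arguments.

Lemma id_hom_ax (K : fieldType) (A : cdga K) : is_cdga_hom (A := A) (B := A) id.
Proof. by split. Qed.

Theorem propositionA4 (K : fieldType) (charK0 : [pchar K] =i pred0)
  (A : cdga K) :
  cofibrant A ->
  (exists eps : cd_car A -> K, augmentation eps) ->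
  (forall k : int, k < 0 -> cohom_vanishes A k) ->
  H0_is_ground A ->
  tau_unit_quasi_iso A.
Proof.
move=> cof _ hneg h0.
have [W [W1 W2 W0 W3 W4]] := complement_exists A.
pose S := Sb W2 W0.
have q1 := SQ1 (W2 := W2) (W0 := W0) W1 W3 W4 h0.
have q2 := SQ2 W1 W2 W0 W4 hneg h0.
have [g hg] := cof (Xc S) A (pH S) (CDGAHom (@id_hom_ax _ A)) (pH_fib S) (pH_qi charK0 q1 q2).
exact: (main_qi charK0 (SN (W2:=W2) (W0:=W0)) hg).
Qed.
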